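(* Consider the online optimization problem with multi-step memory cost described in the context. Assume that for every $t$ the hitting cost $f(\cdot,y_t):\mathcal X\to\mathbb R$ is $\alpha$-polyhedral for some $\alpha>0$, and let $\beta=\sum_{i=1}^q\|C_i\|$, where $\|C_i\|$ is the matrix norm induced by the $l_p$ vector norm. Then the algorithm Robust, which chooses $x_t=\arg\min_{x\in\mathcal X}f(x,y_t)$ for every $t=1,\dots,T$, satisfies for every input $\bm s$ $$\mathrm{cost}(\mathrm{Robust},\bm s)\le \max\!\left(\tfrac{\beta+1}{\alpha},1\right)\mathrm{cost}(\mathrm{OPT},\bm s).$$
   Context: Problem: Let $\mathcal X\subseteq\mathbb R^d$, $\mathcal Y\subseteq\mathbb R^m$, $f:\mathcal X\times\mathcal Y\to[0,\infty)$, $\|\cdot\|$ the $l_p$ norm on $\mathbb R^d$ ($p\ge1$), a memory length $q\ge1$ and matrices $C_1,\dots,C_q\in\mathbb R^{d\times d}$. An instance $\bm s$ consists of given initial actions $x_{1-q},\dots,x_0\in\mathcal X$ (shared by all algorithms) and contexts $y_1,\dots,y_T\in\mathcal Y$. At each step $t$ the context $y_t$ is revealed and an online algorithm irrevocably chooses $x_t\in\mathcal X$. The memory cost is $d(x_t,x_{t-q:t-1})=\|x_t-\sum_{i=1}^q C_i x_{t-i}\|$ and the total cost of an algorithm is $\sum_{t=1}^T f(x_t,y_t)+d(x_t,x_{t-q:t-1})$. $\mathrm{cost}(\mathrm{OPT},\bm s)$ is the optimal offline cost, i.e. the infimum of this total cost over all $x_1,\dots,x_T\in\mathcal X$ with all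 contexts known in advance. $\alpha$-polyhedral: $f(\cdot,y)$ has a unique minimizer $x^*\in\mathcal X$ and $f(x,y)-f(x^*,y)\ge\alpha\|x-x^*\|$ for all $x\in\mathcal X$. *)

(* Defs.v *)
From HB Require Import structures.
From mathcomp Require Import all_boot all_order all_algebra.
From mathcomp Require Import all_classical all_reals all_analysis.
Set Implicit Arguments. Unset Strict Implicit. Unset Printing Implicit Defensive.
Import Order.TTheory GRing.Theory Num.Theory.
Local Open Scope classical_set_scope.
Local Open Scope ring_scope.

Definition lpnorm (R : realType) (d : nat) (p : R) (x : 'cV[R]_d) : R :=
  (\sum_(i < d) `|x i 0| `^ p) `^ p^-1.

Definition opnorm (R : realType) (d : nat) (p : R) (A : 'M[R]_d) : R :=
  sup [set lpnorm p (A *m x) | x in [set x : 'cV[R]_d | lpnorm p x <= 1]].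

(* Trajectories are indexed by integers: x t is the action at time t,
   times 1-q..0 hold the given initial actions.  C i (i : 'I_q) stands for C_{i+1}. *)
Definition memcost (R : realType) (d q : nat) (p : R) (C : 'I_q -> 'M[R]_d)
  (x : int -> 'cV[R]_d) (t : int) : R :=
  lpnorm p (x t - \sum_(i < q) C i *m x (t - (i.+1)%:Z)).

Definition total_cost (R : realType) (d m q : nat) (p : R)
  (f : 'cV[R]_d -> 'cV[R]_m -> R) (C : 'I_q -> 'M[R]_d)
  (y : nat -> 'cV[R]_m) (T : nat) (x : int -> 'cV[R]_d) : R :=
  \sum_(1 <= t < T.+1) (f (x t%:Z) (y t) + memcost p C x t%:Z).

Definition admissible (R : realType) (d q : nat) (X : set 'cV[R]_d)
  (x0 : int -> 'cV[R]_d) (T : nat) (x : int -> 'cV[R]_d) : Prop :=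
  (forall t : int, 1 - q%:Z <= t <= 0 -> x t = x0 t) /\
  (forall t : nat, (1 <= t <= T)%N -> X (x t%:Z)).

Definition opt_cost (R : realType) (d m q : nat) (p : R) (X : set 'cV[R]_d)
  (f : 'cV[R]_d -> 'cV[R]_m -> R) (C : 'I_q -> 'M[R]_d)
  (x0 : int -> 'cV[R]_d) (y : nat -> 'cV[R]_m) (T : nat) : R :=
  inf [set total_cost p f C y T x | x in @admissible R d q X x0 T].

Definition is_minimizer (R : realType) (d m : nat) (X : set 'cV[R]_d)
  (f : 'cV[R]_d -> 'cV[R]_m -> R) (y : 'cV[R]_m) (xs : 'cV[R]_d) : Prop :=
  X xs /\ (forall x, X x -> f xs y <= f x y).

Definition polyhedral (R : realType) (d m : nat) (p : R) (X : set 'cV[R]_d)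
  (f : 'cV[R]_d -> 'cV[R]_m -> R) (y : 'cV[R]_m) (alpha : R) : Prop :=
  exists xs, is_minimizer X f y xs /\
    (forall x', is_minimizer X f y x' -> x' = xs) /\
    (forall x, X x -> alpha * lpnorm p (x - xs) <= f x y - f xs y).

(* Main.v *)
Require Import Defs.
From HB Require Import structures.
From mathcomp Require Import all_boot all_order all_algebra.
From mathcomp Require Import all_classical all_reals all_analysis.
From mathcomp Require Import ring lra zify.
Import Order.TTheory GRing.Theory Num.Theory.
Local Open Scope classical_set_scope.
Local Open Scope ring_scope.

Lemma convp (R : realType) (p l x y : R) : 1 <= p -> 0 <= l <= 1 -> 0 <= x -> 0 <= y ->
  (l * x + (1 - l) * y) `^ p <= l * x `^ p + (1 - l) * y `^ p.
Proof.
move=> p1 /andP[l0 l1] x0 y0.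
have := (convex_powR p1 (Itv01 l0 l1)).
move=> /(_ x y); rewrite !inE /= !in_itv /= !andbT => /(_ x0 y0).
by rewrite !convRE.
Qed.

Lemma split_help (R : realType) (A B u v : R) : 0<A -> 0<B -> u + v = (A+B) * (A/(A+B) * (u/A) + (1 - A/(A+B)) * (v/B)).
Proof.
move=> Ag Bg.
have h : A + B != 0 by rewrite gt_eqF // addr_gt0.
field. by rewrite h !gt_eqF.
Qed.

Section LP.
Variables (R : realType) (d : nat) (p : R).
Hypothesis p1 : 1 <= p.
Let p0 : 0 < p. Proof. exact: lt_le_trans p1. Qed.
Let pn0 : p != 0. Proof. by move: p0; rewrite lt0r => /andP[]. Qed.

Implicit Types (x a b : 'cV[R]_d).
Definition S (x : 'cV[R]_d) := \sum_(i < d) `|x i 0| `^ p.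

Lemma S_ge0 x : 0 <= S x. Proof. by apply: sumr_ge0 => i _; apply: powR_ge0. Qed.

Lemma lpE x : lpnorm p x = S x `^ p^-1. Proof. by []. Qed.
Opaque lpnorm.

Lemma lp_ge0 x : 0 <= lpnorm p x. Proof. exact: powR_ge0. Qed.

Lemma root_pow (a : R) : 0 <= a -> (a `^ p) `^ p^-1 = a.
Proof. by move=> a0; rewrite -powRrM mulfV // powRr1. Qed.

Lemma pow_root (a : R) : 0 <= a -> (a `^ p^-1) `^ p = a.
Proof. by move=> a0; rewrite -powRrM mulVf // powRr1. Qed.

Lemma lp_pow x : lpnorm p x `^ p = S x.
Proof. by rewrite pow_root // S_ge0. Qed.

Lemma lp_comp x i : `|x i 0| <= lpnorm p x.
Proof.
rewrite -[leLHS](@root_pow _ (normr_ge0 _)) lpE.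
apply: ge0_ler_powR; rewrite ?invr_ge0 ?nnegrE ?powR_ge0 ?S_ge0 ?(ltW p0) //.
rewrite /S (bigD1 i) //= lerDl; by apply: sumr_ge0 => j _; apply: powR_ge0.
Qed.

Lemma lp_eq0 x : lpnorm p x = 0 -> x = 0.
Proof.
move=> h; apply/matrixP => i j; rewrite (ord1 j) mxE.
by apply/eqP; rewrite -normr_le0 -h lp_comp.
Qed.

Lemma lp0 : lpnorm p (0 : 'cV[R]_d) = 0.
Proof.
rewrite lpE /S big1 ?powR0 ?invr_eq0 // => i _.
by rewrite mxE normr0 powR0.
Qed.

Lemma lpZ c x : lpnorm p (c *: x) = `|c| * lpnorm p x.
Proof.
rewrite !lpE /S.
rewrite (eq_bigr (fun i => `|c| `^ p * `|x i 0| `^ p)); last first.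
  by move=> i _; rewrite mxE normrM powRM.
rewrite -mulr_sumr powRM ?powR_ge0 //; last by apply: sumr_ge0 => i _; apply: powR_ge0.
by rewrite root_pow.
Qed.

Lemma invpow y : 0 < y -> (y^-1) `^ p = (y `^ p)^-1.
Proof.
move=> y0; rewrite -(powR_inv1 (ltW y0)) powRAC powR_inv1 //; exact: powR_ge0.
Qed.

Lemma lpD_aux a b A B : lpnorm p a = A -> lpnorm p b = B -> 0 < A -> 0 < B ->
  lpnorm p (a + b) <= A + B.
Proof.
move=> hA0 hB0 Ag Bg.
have ABg : 0 < A + B by rewrite addr_gt0.
have Ag' := ltW Ag. have Bg' := ltW Bg. have ABg' := ltW ABg.
have l01 : 0 <= A / (A + B) <= 1.
  by rewrite divr_ge0 //= ler_pdivrMr // mul1r lerDl.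
have key : S (a + b) <= (A + B) `^ p.
  rewrite /S.
  apply: (@le_trans _ _ (\sum_(i < d) (A + B) `^ p *
     (A / (A + B) * (`|a i 0| `^ p / A `^ p) + (1 - A / (A + B)) * (`|b i 0| `^ p / B `^ p)))).
    apply: ler_sum => i _.
    have e : `|a i 0| + `|b i 0| = (A + B) * (A / (A + B) * (`|a i 0| / A) + (1 - A / (A + B)) * (`|b i 0| / B)).
      exact: split_help.
    apply: (@le_trans _ _ ((`|a i 0| + `|b i 0|) `^ p)).
      apply: ge0_ler_powR; rewrite ?nnegrE ?addr_ge0 //.
      - exact: ltW p0.
      - by rewrite mxE ler_normD.
    rewrite e powRM //; last first.
      case/andP: l01 => l0 l1.
      by rewrite addr_ge0 // mulr_ge0 ?divr_ge0 ?subr_ge0.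
    apply: ler_wpM2l; first exact: powR_ge0.
    rewrite -!invpow // -!powRM ?invr_ge0 //.
    by apply: convp => //; rewrite divr_ge0.
  have hA : A `^ p = \sum_(i < d) `|a i 0| `^ p by rewrite -hA0; exact: lp_pow.
  have hB : B `^ p = \sum_(i < d) `|b i 0| `^ p by rewrite -hB0; exact: lp_pow.
  have pA : A `^ p != 0 by rewrite gt_eqF // powR_gt0.
  have pB : B `^ p != 0 by rewrite gt_eqF // powR_gt0.
  rewrite -mulr_sumr big_split /= -!mulr_sumr -!mulr_suml -hA -hB !mulfV //.
  by rewrite !mulr1 subrKC mulr1.
rewrite lpE -[leRHS](@root_pow _ ABg').
apply: ge0_ler_powR => //; rewrite ?invr_ge0 ?nnegrE ?S_ge0 ?powR_ge0 ?(ltW p0) //.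
Qed.

Lemma lpD a b : lpnorm p (a + b) <= lpnorm p a + lpnorm p b.
Proof.
have [A0|An0] := eqVneq (lpnorm p a) 0.
  by rewrite (@lp_eq0 a A0) add0r lp0 add0r.
have [B0|Bn0] := eqVneq (lpnorm p b) 0.
  by rewrite (@lp_eq0 b B0) addr0 lp0 addr0.
apply: lpD_aux => //.
  by rewrite lt_neqAle eq_sym An0 lp_ge0.
by rewrite lt_neqAle eq_sym Bn0 lp_ge0.
Qed.

Lemma lp_sum (I : Type) (r : seq I) (P : pred I) (F : I -> 'cV[R]_d) :
  lpnorm p (\sum_(i <- r | P i) F i) <= \sum_(i <- r | P i) lpnorm p (F i).
Proof.
apply: (big_ind2 (fun u v => lpnorm p u <= v)); first by rewrite lp0.
  move=> x1 x2 y1 y2 h1 h2; exact: (le_trans (lpD x1 y1) (lerD h1 h2)).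
by [].
Qed.

Lemma lpN x : lpnorm p (- x) = lpnorm p x.
Proof. by rewrite -scaleN1r lpZ normrN1 mul1r. Qed.

Lemma lpB x y : lpnorm p (x - y) = lpnorm p (y - x).
Proof. by rewrite -lpN opprB. Qed.

Lemma mul_col (A : 'M[R]_d) x : A *m x = \sum_(j < d) x j 0 *: col j A.
Proof.
apply/matrixP => i k; rewrite !mxE summxE; apply: eq_bigr => j _.
by rewrite !mxE (ord1 k) mulrC.
Qed.

Let OS (A : 'M[R]_d) := [set lpnorm p (A *m x) | x in [set x : 'cV[R]_d | lpnorm p x <= 1]].

Lemma OS_sup (A : 'M[R]_d) : has_sup (OS A).
Proof.
split.
  exists (lpnorm p (A *m 0)), 0 => //=; by rewrite lp0 ler01.
exists (\sum_(j < d) lpnorm p (col j A)) => _ [z /= hz <-].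
rewrite mul_col; apply: (le_trans (lp_sum _ _ _ _)).
apply: ler_sum => j _; rewrite lpZ.
rewrite -[leRHS]mul1r; apply: ler_wpM2r; first exact: lp_ge0.
exact: le_trans (lp_comp _ _) hz.
Qed.

Lemma opnorm_ge0 (A : 'M[R]_d) : 0 <= opnorm p A.
Proof.
have [_ ub] := OS_sup A.
apply: le_trans (sup_upper_bound (OS_sup A) _); last first.
  by exists 0; rewrite /= ?lp0 ?ler01.
by rewrite mulmx0 lp0.
Qed.

Lemma opnorm_bound (A : 'M[R]_d) x : lpnorm p (A *m x) <= opnorm p A * lpnorm p x.
Proof.
have [N0|Nn0] := eqVneq (lpnorm p x) 0.
  by rewrite (@lp_eq0 x N0) mulmx0 lp0 mulr0.
have Ng : 0 < lpnorm p x by rewrite lt_neqAle eq_sym Nn0 lp_ge0.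
set z := (lpnorm p x)^-1 *: x.
have hz : lpnorm p z = 1 by rewrite /z lpZ ger0_norm ?invr_ge0 ?lp_ge0 // mulVf.
have hs : lpnorm p (A *m z) <= opnorm p A.
  rewrite /opnorm; apply: (sup_upper_bound (OS_sup A)).
  by exists z => //=; rewrite hz.
have ex : A *m x = lpnorm p x *: (A *m z).
  by rewrite /z scalemxAr scalerA mulfV // scale1r.
rewrite ex lpZ (ger0_norm (lp_ge0 x)) mulrC.
by apply: ler_wpM2r => //; exact: lp_ge0.
Qed.
End LP.

Lemma shift_eq (R : realType) (e : int -> R) (j T : nat) :
  (forall s : int, 1 - j%:Z <= s <= 0 -> e s = 0) ->
  \sum_(1 <= t < T.+1) e (t%:Z - j%:Z) = \sum_(1 <= t < (T - j)%N.+1) e t%:Z.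
Proof.
move=> hz; elim: T => [|T IH].
  by rewrite !big_geq.
rewrite big_nat_recr //= IH.
have [hT|hT] := leqP T.+1 j.
  have -> : (T.+1 - j)%N = (T - j)%N by lia.
  rewrite hz ?addr0 //.
  apply/andP; split; lia.
have -> : (T.+1 - j)%N = (T - j)%N.+1 by lia.
rewrite [in RHS]big_nat_recr //=; congr (_ + e _); lia.
Qed.

Lemma sum_mono (R : realType) (e : int -> R) (m n : nat) : (m <= n)%N ->
  (forall s, 0 <= e s) ->
  \sum_(1 <= t < m.+1) e t%:Z <= \sum_(1 <= t < n.+1) e t%:Z.
Proof.
move=> hmn h0; rewrite (@big_cat_nat _ _ _ m.+1 1 n.+1) //= lerDl.
by apply: sumr_ge0 => i _.
Qed.

Lemma decomp (V : zmodType) (a b s1 s2 : V) : a - s2 = (a - b) + ((b - s1) + (s1 - s2)).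
Proof. by rewrite !addrA !subrK. Qed.

Lemma arith (R : realType) (Fs Mx F G k : R) : 0 <= Fs -> 0 <= Mx -> 0 <= F - Fs ->
  G <= k * (F - Fs) -> 0 <= k -> Fs + Mx + G <= Num.max k 1 * (F + Mx).
Proof.
move=> Fs0 Mx0 D0 hk k0.
case: (leP k 1) => hk1.
  have : k * (F - Fs) <= F - Fs by rewrite ler_piMl.
  move=> h; rewrite mul1r; lra.
have h1 : Fs <= k * Fs by rewrite ler_peMl // ltW.
have h2 : Mx <= k * Mx by rewrite ler_peMl // ltW.
move: hk; rewrite mulrBr mulrDr => hk; lra.
Qed.

Theorem theorem2 (R : realType) (d m q : nat) (p alpha : R)
  (X : set 'cV[R]_d) (Y : set 'cV[R]_m) (f : 'cV[R]_d -> 'cV[R]_m -> R)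
  (C : 'I_q -> 'M[R]_d) (x0 : int -> 'cV[R]_d) (y : nat -> 'cV[R]_m) (T : nat)
  (xr : int -> 'cV[R]_d) :
  1 <= p -> (1 <= q)%N -> 0 < alpha ->
  (forall x z, X x -> Y z -> 0 <= f x z) ->
  (forall t : int, 1 - q%:Z <= t <= 0 -> X (x0 t)) ->
  (forall t : nat, (1 <= t <= T)%N -> Y (y t)) ->
  (forall t : nat, (1 <= t <= T)%N -> polyhedral p X f (y t) alpha) ->
  (* xr is the trajectory of Robust: initial actions, then x_t = argmin f(.,y_t) *)
  (forall t : int, 1 - q%:Z <= t <= 0 -> xr t = x0 t) ->
  (forall t : nat, (1 <= t <= T)%N -> is_minimizer X f (y t) (xr t%:Z)) ->
  let beta := \sum_(i < q) opnorm p (C i) in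
  total_cost p f C y T xr <=
    Num.max ((beta + 1) / alpha) 1 * opt_cost p X f C x0 y T.
Proof.
move=> p1 q1 a0 fge0 x0X yY hpoly xr0 xrmin; cbv zeta.
set beta := \sum_(i < q) opnorm p (C i).
have beta0 : 0 <= beta by apply: sumr_ge0 => i _; exact: (@opnorm_ge0 R d p p1).
set k := (beta + 1) / alpha.
set M := Num.max k 1.
have M1 : 1 <= M by rewrite /M le_max lexx orbT.
have Mg : 0 < M by apply: lt_le_trans M1.
have main : forall x, @admissible R d q X x0 T x ->
    total_cost p f C y T xr <= M * total_cost p f C y T x.
  move=> x [hx0 hxX].
  pose e := fun s : int => lpnorm p (x s - xr s).
  have e0 : forall s, 0 <= e s by move=> s; exact: lp_ge0.
  have ez : forall s : int, 1 - q%:Z <= s <= 0 -> e s = 0.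
    by move=> s hs; rewrite /e hx0 // xr0 // subrr (@lp0 R d p p1).
  have hpol : forall t : nat, (1 <= t <= T)%N ->
      alpha * e t%:Z <= f (x t%:Z) (y t) - f (xr t%:Z) (y t).
    move=> t ht; case: (hpoly t ht) => xs [hmin [huniq hineq]].
    rewrite /e (huniq _ (xrmin t ht)); exact: hineq (hxX t ht).
  have hmem : forall t : nat, memcost p C xr t%:Z <= e t%:Z + memcost p C x t%:Z +
      \sum_(i < q) opnorm p (C i) * e (t%:Z - (i.+1)%:Z).
    move=> t; rewrite /memcost (@decomp _ (xr t%:Z) (x t%:Z) (\sum_(i < q) C i *m x (t%:Z - (i.+1)%:Z))).
    apply: (le_trans (@lpD R d p p1 _ _)); rewrite -[leRHS]addrA; apply: lerD.
      by rewrite /e (@lpB R d p p1).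
    apply: (le_trans (@lpD R d p p1 _ _)); apply: lerD => //.
    rewrite -sumrB.
    apply: (le_trans (@lp_sum R d p p1 _ _ _ _)); apply: ler_sum => i _.
    by rewrite -mulmxBr; apply: (@opnorm_bound R d p p1).
  set F := \sum_(1 <= t < T.+1) f (x t%:Z) (y t).
  set Fs := \sum_(1 <= t < T.+1) f (xr t%:Z) (y t).
  set Mx := \sum_(1 <= t < T.+1) memcost p C x t%:Z.
  set E := \sum_(1 <= t < T.+1) e t%:Z.
  have Fs0 : 0 <= Fs.
    rewrite /Fs big_nat; apply: sumr_ge0 => t ht; apply: fge0.
      exact: (xrmin t ht).1.
    exact: yY.
  have Mx0 : 0 <= Mx by apply: sumr_ge0 => t _; exact: lp_ge0.
  have E0 : 0 <= E by apply: sumr_ge0 => t _; exact: e0.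
  have hE : alpha * E <= F - Fs.
    rewrite /E mulr_sumr /F /Fs -sumrB big_nat [X in _ <= X]big_nat.
    by apply: ler_sum => t ht; exact: hpol.
  have hshift : \sum_(1 <= t < T.+1) \sum_(i < q) opnorm p (C i) * e (t%:Z - (i.+1)%:Z) <= beta * E.
    rewrite exchange_big /= /beta mulr_suml; apply: ler_sum => i _.
    rewrite -mulr_sumr; apply: ler_wpM2l; first exact: (@opnorm_ge0 R d p p1).
    rewrite (@shift_eq R e i.+1 T); last first.
      move=> s /andP[h1 h2]; apply: ez; apply/andP; split => //.
      apply: le_trans h1; have := ltn_ord i; lia.
    by apply: sum_mono => //; exact: leq_subr.
  have hcost : total_cost p f C y T xr <= Fs + Mx + (1 + beta) * E.
    rewrite /total_cost big_split /= -/Fs -addrA; apply: lerD => //.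
    apply: (le_trans (ler_sum _ (fun t _ => hmem t))).
    have hs : \sum_(1 <= t < T.+1) (e t%:Z + memcost p C x t%:Z +
       \sum_(i < q) opnorm p (C i) * e (t%:Z - (i.+1)%:Z)) =
       E + Mx + \sum_(1 <= t < T.+1) \sum_(i < q) opnorm p (C i) * e (t%:Z - (i.+1)%:Z).
      by rewrite big_split big_split.
    rewrite hs; apply: (le_trans (lerD (lexx _) hshift)); rewrite mulrDl mul1r; lra.
  have tx : total_cost p f C y T x = F + Mx by rewrite /total_cost big_split.
  have k0 : 0 <= k by rewrite /k divr_ge0 // ?addr_ge0 // ltW.
  have hk : (1 + beta) * E <= k * (F - Fs).
    have : k * (alpha * E) <= k * (F - Fs) by apply: ler_wpM2l.
    by rewrite /k mulrA divfK ?gt_eqF // addrC.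
  have D0 : 0 <= F - Fs by apply: le_trans hE; rewrite mulr_ge0 // ltW.
  by rewrite tx; apply: (le_trans hcost); apply: arith.
have hadm : @admissible R d q X x0 T xr by split => // t ht; case: (xrmin t ht).
have h : total_cost p f C y T xr / M <= opt_cost p X f C x0 y T.
  apply: lb_le_inf.
    by exists (total_cost p f C y T xr), xr.
  move=> _ [x hx <-].
  by rewrite ler_pdivrMr // mulrC main.
have := ler_wpM2l (ltW Mg) h.
by rewrite (mulrC M (_ / M)) divfK // gt_eqF.
Qed.
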